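(* Let $A$ be a $B$-module algebra and $V$ a $B$-equivariant $A$-bimodule. Let $J_n(A,B,V)=\sum_{b\in B}{\rm im}\big([L_b,\partial_{n+1}]:{\rm CH}_{n+1}(A,V)\to{\rm CH}_n(A,V)\big)$. Then $J_*(A,B,V)$ is both a differential graded $k$-submodule and a graded $B$-submodule (for the diagonal action $L$) of ${\rm CH}_*(A,V)$, and the quotient ${\rm QCH}_*(A,B,V):={\rm CH}_*(A,V)/J_*(A,B,V)$ is a differential graded $B$-module, i.e. the induced differential on it is $B$-linear.
   Context: $k$ is a field, all tensor products are over $k$, and $B$ is a bialgebra over $k$ with Sweedler notation $\Delta(b)=b_{(1)}\otimes b_{(2)}$ and counit $\varepsilon$. A $B$-module algebra is an associative $k$-algebra $A$ which is a left $B$-module with $b(a_1a_2)=b_{(1)}(a_1)b_{(2)}(a_2)$. A $B$-equivariant $A$-bimodule is an $A$-bimodule $V$ which is a left $B$-module with $b(av)=b_{(1)}(a)b_{(2)}(v)$ and $b(va)=b_{(1)}(v)b_{(2)}(a)$. The Hochschild complex ${\rm CH}_*(A,V)$ has ${\rm CH}_n(A,V)=A^{\otimes n}\otimes V$ with face maps $\partial_j$, $0\le j\le n$: $\partial_j(a_1\otimes\cdots\otimes a_n\otimes v)=(\cdots\otimes a_{j+1}a_{j+2}\otimes\cdots\otimes v)$ for $0\le j<n-1$, $\partial_{n-1}(\ldots)=a_1\otimes\cdots\otimes a_{n-1}\otimes a_nv$, $\partial_n(\ldots)=a_2\otimes\cdots\otimes a_n\otimes va_1$, and $d^{\rm CH}_n=\sum_{j=0}^n(-1)^j\partial_j$.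 $B$ acts diagonally: $L_b(a_1\otimes\cdots\otimes a_n\otimes v)=b_{(1)}(a_1)\otimes\cdots\otimes b_{(n)}(a_n)\otimes b_{(n+1)}(v)$; $[L_b,\partial_{n+1}]=L_b\partial_{n+1}-\partial_{n+1}L_b$. *)

(* Defs.v *)
From HB Require Import structures.
From mathcomp Require Import all_boot all_order all_algebra.
Set Implicit Arguments. Unset Strict Implicit. Unset Printing Implicit Defensive.
Import GRing.Theory.
Local Open Scope ring_scope.

(* Tensor products are not available in MathComp.  We encode an element of  *)
(* a tensor product as a formal finite sum of pure tensors (a list), and two *)
(* formal sums are identified iff they have the same image under EVERY       *)
(* multilinear map into EVERY k-vector space W (universal property of the    *)
(* tensor product).  Sweedler notation Delta(b) = sum b_(1) (x) b_(2) is      *)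
(* encoded literally by a list  cop b : seq (B * B).                         *)

Section Multilinear.
Variable k : fieldType.

Definition bilinear_map (U1 U2 W : lmodType k) (f : U1 -> U2 -> W) : Prop :=
  (forall c x x' y, f (c *: x + x') y = c *: f x y + f x' y) /\
  (forall c x y y', f x (c *: y + y') = c *: f x y + f x y').

Definition trilinear_map (U1 U2 U3 W : lmodType k) (f : U1 -> U2 -> U3 -> W) : Prop :=
  [/\ (forall c x x' y z, f (c *: x + x') y z = c *: f x y z + f x' y z),
      (forall c x y y' z, f x (c *: y + y') z = c *: f x y z + f x y' z) &
      (forall c x y z z', f x y (c *: z + z') = c *: f x y z + f x y z')].

End Multilinear.

Section Bialgebra.
Variables (k : fieldType) (B : algType k).

Definition is_bialgebra (cop : B -> seq (B * B)) (eps : B -> k) : Prop :=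
  [/\
      (forall (W : lmodType k) (f : B -> B -> W), bilinear_map f ->
         forall c b b', \sum_(p <- cop (c *: b + b')) f p.1 p.2
                        = c *: \sum_(p <- cop b) f p.1 p.2 + \sum_(p <- cop b') f p.1 p.2),
      (forall (W : lmodType k) (f : B -> B -> B -> W), trilinear_map f ->
         forall b, \sum_(p <- cop b) \sum_(q <- cop p.1) f q.1 q.2 p.2
                   = \sum_(p <- cop b) \sum_(q <- cop p.2) f p.1 q.1 q.2),
      [/\ (forall c b b', eps (c *: b + b') = c * eps b + eps b'),
          (forall b, \sum_(p <- cop b) eps p.1 *: p.2 = b) &
          (forall b, \sum_(p <- cop b) eps p.2 *: p.1 = b)],
      (forall (W : lmodType k) (f : B -> B -> W), bilinear_map f ->
         (forall b c, \sum_(p <- cop (b * c)) f p.1 p.2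
                      = \sum_(p <- cop b) \sum_(q <- cop c) f (p.1 * q.1) (p.2 * q.2)) /\
         \sum_(p <- cop 1) f p.1 p.2 = f 1 1) &
      (forall b c, eps (b * c) = eps b * eps c) /\ eps 1 = 1].

Definition is_Bmodule (M : lmodType k) (act : B -> M -> M) : Prop :=
  [/\ bilinear_map act,
      (forall b c m, act (b * c) m = act b (act c m)) &
      (forall m, act 1 m = m)].

Definition is_kalgebra (A : lmodType k) (mul : A -> A -> A) : Prop :=
  bilinear_map mul /\ associative mul.

Definition is_module_algebra (cop : B -> seq (B * B))
    (A : lmodType k) (mul : A -> A -> A) (actA : B -> A -> A) : Prop :=
  [/\ is_kalgebra mul, is_Bmodule actA &
      forall b a1 a2, actA b (mul a1 a2)
                      = \sum_(p <- cop b) mul (actA p.1 a1) (actA p.2 a2)].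

Definition is_bimodule (A V : lmodType k) (mul : A -> A -> A)
    (l : A -> V -> V) (r : V -> A -> V) : Prop :=
  [/\ bilinear_map l, bilinear_map r,
      (forall a a' v, l (mul a a') v = l a (l a' v)),
      (forall v a a', r v (mul a a') = r (r v a) a') &
      (forall a v a', r (l a v) a' = l a (r v a'))].

Definition is_equivariant_bimodule (cop : B -> seq (B * B))
    (A V : lmodType k) (mul : A -> A -> A) (actA : B -> A -> A)
    (l : A -> V -> V) (r : V -> A -> V) (actV : B -> V -> V) : Prop :=
  [/\ is_bimodule mul l r, is_Bmodule actV,
      (forall b a v, actV b (l a v) = \sum_(p <- cop b) l (actA p.1 a) (actV p.2 v)) &
      (forall b v a, actV b (r v a) = \sum_(p <- cop b) r (actV p.1 v) (actA p.2 a))].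

End Bialgebra.

Section Hochschild.
Variables (k : fieldType) (B : algType k) (cop : B -> seq (B * B))
  (A V : lmodType k) (mul : A -> A -> A) (actA : B -> A -> A)
  (l : A -> V -> V) (r : V -> A -> V) (actV : B -> V -> V).

(* pure tensor a_1 (x) ... (x) a_n (x) v, encoded as ([:: a_1; ...; a_n], v) *)
Definition ptensor : Type := (seq A * V)%type.
Definition fsum : Type := seq ptensor.

(* x represents an element of CH_n(A,V) = A^{(x) n} (x) V *)
Definition wf (n : nat) (x : fsum) : bool := all (fun p => size p.1 == n) x.

Definition multilinear (n : nat) (W : lmodType k) (f : seq A -> V -> W) : Prop :=
  (forall s, size s = n -> forall c v v', f s (c *: v + v') = c *: f s v + f s v') /\
  (forall s, size s = n -> forall i, (i < n)%N -> forall v c a a',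
     f (set_nth 0 s i (c *: a + a')) v
     = c *: f (set_nth 0 s i a) v + f (set_nth 0 s i a') v).

Definition teq (n : nat) (x y : fsum) : Prop :=
  forall (W : lmodType k) (f : seq A -> V -> W), multilinear n f ->
    \sum_(p <- x) f p.1 p.2 = \sum_(p <- y) f p.1 p.2.

Definition fscale (c : k) (x : fsum) : fsum := [seq (p.1, c *: p.2) | p <- x].
Definition fsub (x y : fsum) : fsum := x ++ fscale (-1) y.

(* face map partial_j on a pure tensor of degree n = size s (j <= n) *)
Definition face (j : nat) (p : ptensor) : ptensor :=
  let: (s, v) := p in
  if (j.+1 < size s)%N then
    (take j s ++ mul (nth 0 s j) (nth 0 s j.+1) :: drop j.+2 s, v)
  else if j.+1 == size s then (take j s, l (nth 0 s j) v)
  else (behead s, r v (nth 0 s 0)).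

Definition faceF (j : nat) (x : fsum) : fsum := map (face j) x.

(* Hochschild differential d_n on CH_n (n >= 1) *)
Definition dCH (n : nat) (x : fsum) : fsum :=
  flatten [seq fscale ((-1) ^+ j) (faceF j x) | j <- iota 0 n.+1].

(* diagonal action: b(a_1 (x) ... (x) a_n (x) v)
   = b_(1) a_1 (x) ... (x) b_(n) a_n (x) b_(n+1) v,
   with the iterated coproduct computed as (id (x) Delta^{(n-1)}) Delta *)
Fixpoint diag (b : B) (s : seq A) (v : V) {struct s} : fsum :=
  match s with
  | [::] => [:: ([::], actV b v)]
  | a :: s' => flatten [seq [seq (actA q.1 a :: p.1, p.2) | p <- diag q.2 s' v]
                       | q <- cop b]
  end.

Definition Lact (b : B) (x : fsum) : fsum := flatten [seq diag b p.1 p.2 | p <- x].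

(* [L_b, partial_{n+1}] applied to y in CH_{n+1} *)
Definition commL (n : nat) (b : B) (y : fsum) : fsum :=
  fsub (Lact b (faceF n.+1 y)) (faceF n.+1 (Lact b y)).

Definition inJ (n : nat) (x : fsum) : Prop :=
  wf n x /\
  exists ys : seq (B * fsum),
    all (fun q => wf n.+1 q.2) ys /\
    teq n x (flatten [seq commL n q.1 q.2 | q <- ys]).

End Hochschild.

(* Main.v *)
Require Import Defs.
From HB Require Import structures.
From mathcomp Require Import all_boot all_order all_algebra zify.
Set Implicit Arguments. Unset Strict Implicit. Unset Printing Implicit Defensive.
Import GRing.Theory.
Local Open Scope ring_scope.

Section Prf.
Variables (k : fieldType) (B : algType k) (cop : B -> seq (B * B)).
Variables (A V : lmodType k) (mul : A -> A -> A) (actA : B -> A -> A)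
  (l : A -> V -> V) (r : V -> A -> V) (actV : B -> V -> V).

Definition S (W : lmodType k) (f : seq A -> V -> W) (x : fsum A V) : W :=
  \sum_(p <- x) f p.1 p.2.

Fixpoint ML (W : lmodType k) (n : nat) (f : seq A -> V -> W) : Prop :=
  match n with
  | 0 => forall c v v', f [::] (c *: v + v') = c *: f [::] v + f [::] v'
  | n'.+1 => (forall t, size t = n' -> forall v c a a',
                f ((c *: a + a') :: t) v = c *: f (a :: t) v + f (a' :: t) v) /\
             (forall a, ML n' (fun t w => f (a :: t) w))
  end.

Lemma ML_multilinear (W : lmodType k) n (f : seq A -> V -> W) :
  ML n f <-> multilinear n f.
Proof.
elim: n f => [|n IH] f /=.
  split=> [H|[H _]]; last by apply: H.
  split=> [[|//] _|//] c v v'; exact: H.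
split.
  move=> [Hh Ht]; split.
    move=> [|a t] //= [Hs] c v v'.
    by move: (Ht a) => /IH [Hv _]; apply: Hv.
  move=> [|a t] //= [Hs] [|i] Hi v c x x' /=; first by apply: Hh.
  by move: (Ht a) => /IH [_ Hp]; apply: Hp.
move=> [Hv Hp]; split.
  move=> t Ht v c a a'.
  have Hs : size (a :: t) = n.+1 by rewrite /= Ht.
  exact: (Hp (a :: t) Hs 0%N (ltn0Sn _) v c a a').
move=> a; apply/IH; split.
  move=> s Hs c v v'; have Hs' : size (a :: s) = n.+1 by rewrite /= Hs.
  exact: (Hv (a :: s) Hs').
move=> s Hs i Hi v c x x'; have Hs' : size (a :: s) = n.+1 by rewrite /= Hs.
exact: (Hp (a :: s) Hs' i.+1 Hi v c x x').
Qed.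

Lemma ML_linV (W : lmodType k) n (f : seq A -> V -> W) :
  ML n f -> forall s, size s = n -> forall c v v', f s (c *: v + v') = c *: f s v + f s v'.
Proof. by move=> /ML_multilinear [H _]. Qed.

Lemma ML_ext (W : lmodType k) n (f g : seq A -> V -> W) :
  (forall s v, size s = n -> f s v = g s v) -> ML n f -> ML n g.
Proof.
elim: n f g => [|n IH] f g Hfg /=.
  by move=> H c v v'; rewrite -!Hfg //; apply: H.
move=> [Hh Ht]; split.
  by move=> t Hs v c a a'; rewrite -!Hfg /= ?Hs //; apply: Hh.
move=> a; apply: (IH _ _ _ (Ht a)) => s v Hs; apply: Hfg; by rewrite /= Hs.
Qed.

Lemma ML_comb (W : lmodType k) n c (f g : seq A -> V -> W) :
  ML n f -> ML n g -> ML n (fun s v => c *: f s v + g s v).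
Proof.
elim: n f g => [|n IH] f g /=.
  move=> Hf Hg d v v'; rewrite Hf Hg !scalerDr !scalerA mulrC.
  by rewrite addrACA.
move=> [Hf1 Hf2] [Hg1 Hg2]; split; last by move=> a; apply: IH.
move=> t Ht v d a a'; rewrite Hf1 // Hg1 // !scalerDr !scalerA mulrC.
by rewrite addrACA.
Qed.

Lemma ML_zero (W : lmodType k) n : ML n (fun _ _ => (0 : W)).
Proof.
elim: n => [|n IH] /=; first by move=> *; rewrite scaler0 addr0.
by split=> // *; rewrite scaler0 addr0.
Qed.

Lemma ML_sum (W : lmodType k) n (I : Type) (xs : seq I) (F : I -> seq A -> V -> W) :
  (forall i, ML n (F i)) -> ML n (fun s v => \sum_(i <- xs) F i s v).
Proof.
move=> HF; elim: xs => [|i xs IH].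
  by have := ML_zero W n; apply: ML_ext => s v _; rewrite big_nil.
have := ML_comb 1 (HF i) IH; apply: ML_ext => s v _.
by rewrite big_cons scale1r.
Qed.

Lemma ML_compV (W : lmodType k) n (f : seq A -> V -> W) (phi : V -> V) :
  (forall c w w', phi (c *: w + w') = c *: phi w + phi w') ->
  ML n f -> ML n (fun s v => f s (phi v)).
Proof.
move=> Hphi; elim: n f => [|n IH] f /=.
  by move=> Hf c v v'; rewrite Hphi Hf.
by move=> [H1 H2]; split=> [t Ht v c a a'|a]; [apply: H1 | exact: (IH (fun t w => f (a :: t) w) (H2 a))].
Qed.


Hypothesis r_l : forall a v a', r (l a v) a' = l a (r v a').
Hypothesis r_mul : forall v a a', r v (mul a a') = r (r v a) a'.

Notation fc := (face mul l r).

Lemma size_face j (p : ptensor A V) : size (fc j p).1 = (size p.1).-1.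
Proof.
case: p => s v /=.
case: ifP => [H|_].
  rewrite size_cat /= size_take size_drop.
  have -> : (j < size s)%N by apply: ltnW.
  move: H; lia.
case: ifP => [/eqP H|_] /=; last by rewrite size_behead.
by rewrite size_take -H ltnSn.
Qed.

Lemma face_cons j a t v : (j < size t)%N ->
  fc j.+1 (a :: t, v) = (a :: (fc j (t, v)).1, (fc j (t, v)).2).
Proof.
move=> Hj /=; rewrite ltnS eqSS.
case: ifP => // /negbT; rewrite -leqNgt => H.
by have -> : j.+1 == size t by rewrite eqn_leq Hj H.
Qed.

Lemma face_last a t v : fc (size t).+1 (a :: t, v) = (t, r v a).
Proof.
rewrite /=; have -> : ((size t).+2 < (size t).+1)%N = false by lia.
by have -> : ((size t).+2 == (size t).+1) = false by lia.
Qed.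

Lemma face_rV j t v a : (j < size t)%N ->
  fc j (t, r v a) = ((fc j (t, v)).1, r (fc j (t, v)).2 a).
Proof.
move=> Hj /=; case: ifP => // H1; case: ifP => [_|H2] /=; first by rewrite r_l.
by exfalso; move: H1 H2 Hj; lia.
Qed.

Lemma face0_mul a a' t v : fc 0 (a :: a' :: t, v) = (mul a a' :: t, v).
Proof. by rewrite /= drop0. Qed.

Lemma face0_l a v : fc 0 ([:: a], v) = ([::], l a v).
Proof. by []. Qed.

Lemma face_F1 m j s v : size s = m.+1 -> (j < m)%N ->
  fc j (fc m.+1 (s, v)) = fc m (fc j.+1 (s, v)).
Proof.
case: s => [|a t] // [<-] Hj.
rewrite face_last face_rV // face_cons //.
case Et: (size t) Hj => [|m0] // Hj.
have Ht : size (fc j (t, v)).1 = m0 by rewrite size_face /= Et.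
by rewrite -{1}Ht face_last.
Qed.

Lemma face_F2 m s v : size s = m.+1 -> (0 < m)%N ->
  fc m (fc 0 (s, v)) = fc m (fc m.+1 (s, v)).
Proof.
case: s => [|a [|a' t]] // [<-] // _.
rewrite face0_mul (face_last a (a' :: t)) !face_last.
by rewrite -r_mul.
Qed.


Lemma lin0 (U W : lmodType k) (phi : U -> W) :
  (forall c x y, phi (c *: x + y) = c *: phi x + phi y) -> phi 0 = 0.
Proof.
move=> H; have := H 1 0 0; rewrite scale1r addr0 => /(congr1 (fun z => z - phi 0)).
by rewrite subrr addrK scale1r => ->.
Qed.

Lemma lin_sum (U W : lmodType k) (phi : U -> W) (I : Type) (xs : seq I) (F : I -> U) :
  (forall c x y, phi (c *: x + y) = c *: phi x + phi y) ->
  phi (\sum_(i <- xs) F i) = \sum_(i <- xs) phi (F i).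
Proof.
move=> H; elim: xs => [|i xs IH]; first by rewrite !big_nil (lin0 H).
rewrite !big_cons -IH; have := H 1 (F i) (\sum_(j <- xs) F j).
by rewrite !scale1r.
Qed.

Definition Fc (W : lmodType k) (f : seq A -> V -> W) j : seq A -> V -> W :=
  fun t w => f (fc j (t, w)).1 (fc j (t, w)).2.

Notation dg := (diag cop actA actV).

Definition Df (W : lmodType k) (f : seq A -> V -> W) b : seq A -> V -> W :=
  fun t w => S f (dg b t w).

Lemma D_nil (W : lmodType k) (f : seq A -> V -> W) b v : Df f b [::] v = f [::] (actV b v).
Proof. by rewrite /Df /S /= big_seq1. Qed.

Lemma D_cons (W : lmodType k) (f : seq A -> V -> W) b a s v :
  Df f b (a :: s) v = \sum_(q <- cop b) Df (fun t w => f (actA q.1 a :: t) w) q.2 s v.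
Proof.
rewrite /Df /S /= big_flatten /= big_map; apply: eq_bigr => q _.
by rewrite big_map.
Qed.

Lemma size_diag b s v : all (fun p => size p.1 == size s) (dg b s v).
Proof.
elim: s b => [|a s IH] b /=; first by [].
apply/allP => p' /flattenP [x /mapP [q _ ->]] /mapP [p Hp ->] /=.
by move/allP: (IH q.2) => /(_ p Hp).
Qed.

Lemma D_ext (W : lmodType k) (f g : seq A -> V -> W) b s v :
  (forall t w, size t = size s -> f t w = g t w) -> Df f b s v = Df g b s v.
Proof.
move=> H; rewrite /Df /S; apply: eq_big_seq => p Hp; apply: H.
by move/allP: (size_diag b s v) => /(_ p Hp) /eqP.
Qed.

Lemma D_comb (W : lmodType k) (f g : seq A -> V -> W) c b s v :
  Df (fun t w => c *: f t w + g t w) b s v = c *: Df f b s v + Df g b s v.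
Proof. by rewrite /Df /S big_split /= scaler_sumr. Qed.

Lemma D_sumf (W : lmodType k) (I : Type) (xs : seq I) (F : I -> seq A -> V -> W) b s v :
  Df (fun t w => \sum_(i <- xs) F i t w) b s v = \sum_(i <- xs) Df (F i) b s v.
Proof. by rewrite /Df /S exchange_big. Qed.

Lemma S_ext (W : lmodType k) (f g : seq A -> V -> W) n x :
  wf n x -> (forall t w, size t = n -> f t w = g t w) -> S f x = S g x.
Proof.
move=> /allP Hx H; rewrite /S; apply: eq_big_seq => p Hp; apply: H.
by move: (Hx p Hp) => /eqP.
Qed.

Lemma S_comb (W : lmodType k) (f g : seq A -> V -> W) c x :
  S (fun t w => c *: f t w + g t w) x = c *: S f x + S g x.
Proof. by rewrite /S big_split /= scaler_sumr. Qed.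

Lemma S_sumf (W : lmodType k) (I : Type) (xs : seq I) (F : I -> seq A -> V -> W) x :
  S (fun t w => \sum_(i <- xs) F i t w) x = \sum_(i <- xs) S (F i) x.
Proof. by rewrite /S exchange_big. Qed.


Hypothesis cop_lin : forall (W : lmodType k) (f : B -> B -> W), bilinear_map f ->
  forall c b b', \sum_(p <- cop (c *: b + b')) f p.1 p.2
                 = c *: \sum_(p <- cop b) f p.1 p.2 + \sum_(p <- cop b') f p.1 p.2.
Hypothesis cop_coassoc : forall (W : lmodType k) (f : B -> B -> B -> W), trilinear_map f ->
  forall b, \sum_(p <- cop b) \sum_(q <- cop p.1) f q.1 q.2 p.2
            = \sum_(p <- cop b) \sum_(q <- cop p.2) f p.1 q.1 q.2.
Hypothesis cop_mul : forall (W : lmodType k) (f : B -> B -> W), bilinear_map f ->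
  forall b c, \sum_(p <- cop (b * c)) f p.1 p.2
              = \sum_(p <- cop b) \sum_(q <- cop c) f (p.1 * q.1) (p.2 * q.2).
Hypothesis actA_bil : bilinear_map actA.
Hypothesis actA_mul : forall b c a, actA (b * c) a = actA b (actA c a).
Hypothesis actV_bil : bilinear_map actV.
Hypothesis actV_mul : forall b c v, actV (b * c) v = actV b (actV c v).
Hypothesis mul_bil : bilinear_map mul.
Hypothesis l_bil : bilinear_map l.
Hypothesis r_bil : bilinear_map r.
Hypothesis modalg : forall b a1 a2,
  actA b (mul a1 a2) = \sum_(p <- cop b) mul (actA p.1 a1) (actA p.2 a2).
Hypothesis equiv_l : forall b a v,
  actV b (l a v) = \sum_(p <- cop b) l (actA p.1 a) (actV p.2 v).

Lemma actAl c b b' a : actA (c *: b + b') a = c *: actA b a + actA b' a.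
Proof. exact: actA_bil.1. Qed.
Lemma actAr b c a a' : actA b (c *: a + a') = c *: actA b a + actA b a'.
Proof. exact: actA_bil.2. Qed.
Lemma actVl c b b' v : actV (c *: b + b') v = c *: actV b v + actV b' v.
Proof. exact: actV_bil.1. Qed.
Lemma actVr b c v v' : actV b (c *: v + v') = c *: actV b v + actV b v'.
Proof. exact: actV_bil.2. Qed.
Lemma mull c a a' x : mul (c *: a + a') x = c *: mul a x + mul a' x.
Proof. exact: mul_bil.1. Qed.
Lemma mulr' x c a a' : mul x (c *: a + a') = c *: mul x a + mul x a'.
Proof. exact: mul_bil.2. Qed.
Lemma ll c a a' v : l (c *: a + a') v = c *: l a v + l a' v.
Proof. exact: l_bil.1. Qed.
Lemma lr a c v v' : l a (c *: v + v') = c *: l a v + l a v'.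
Proof. exact: l_bil.2. Qed.
Lemma rl c v v' a : r (c *: v + v') a = c *: r v a + r v' a.
Proof. exact: r_bil.1. Qed.
Lemma rr v c a a' : r v (c *: a + a') = c *: r v a + r v a'.
Proof. exact: r_bil.2. Qed.

Lemma ML_D (W : lmodType k) n (f : seq A -> V -> W) b : ML n f -> ML n (Df f b).
Proof.
elim: n f b => [|n IH] f b /=.
  by move=> Hf c v v'; rewrite !D_nil actVr Hf.
move=> [Hh Ht]; split.
  move=> t Ht' v c a a'; rewrite !D_cons scaler_sumr -big_split; apply: eq_bigr => q _.
  have E := D_comb (fun t w => f (actA q.1 a :: t) w) (fun t w => f (actA q.1 a' :: t) w) c q.2 t v.
  transitivity (Df (fun t w => c *: f (actA q.1 a :: t) w + f (actA q.1 a' :: t) w) q.2 t v); last exact: E.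
  apply: D_ext => t0 w Hs; rewrite actAr Hh // Hs Ht' //.
move=> a.
have := ML_sum (cop b) (fun q => IH (fun t w => f (actA q.1 a :: t) w) q.2 (Ht _)).
by apply: ML_ext => t w _; rewrite D_cons.
Qed.

Lemma D_linb (W : lmodType k) (f : seq A -> V -> W) c b b' s v : ML (size s) f ->
  Df f (c *: b + b') s v = c *: Df f b s v + Df f b' s v.
Proof.
elim: s f c b b' v => [|a s IH] f c b b' v /=.
  by move=> Hf; rewrite !D_nil actVl Hf.
move=> [Hh Ht]; rewrite !D_cons.
have H : bilinear_map (fun x y : B => Df (fun t w => f (actA x a :: t) w) y s v).
  split.
    move=> c0 x x' y; rewrite -D_comb; apply: D_ext => t w Hs.
    by rewrite actAl Hh.
  by move=> c0 x y y'; apply: IH; apply: Ht.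
have E := cop_lin H c b b'; cbv beta in E; exact: E.
Qed.

Lemma G_bil (W : lmodType k) (f : seq A -> V -> W) a s v : ML (size s).+1 f ->
  bilinear_map (fun x y : B => Df (fun t w => f (actA x a :: t) w) y s v).
Proof.
move=> [Hh Ht]; split.
  move=> c0 x x' y; rewrite -D_comb; apply: D_ext => t w Hs.
  by rewrite actAl Hh.
by move=> c0 x y y'; apply: D_linb; apply: Ht.
Qed.

Lemma D_mul (W : lmodType k) (f : seq A -> V -> W) b c s v : ML (size s) f ->
  Df (Df f b) c s v = Df f (b * c) s v.
Proof.
elim: s f b c v => [|a s IH] f b c v.
  by move=> _; rewrite !D_nil actV_mul.
move=> Hf; rewrite D_cons [RHS]D_cons.
have E := cop_mul (G_bil a v Hf) b c; cbv beta in E; rewrite E {E}.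
transitivity (\sum_(q <- cop c) \sum_(q' <- cop b)
   Df (fun t w => f (actA q'.1 (actA q.1 a) :: t) w) (q'.2 * q.2) s v).
  apply: eq_bigr => q _.
  have -> : Df (fun t w => Df f b (actA q.1 a :: t) w) q.2 s v =
     Df (fun t w => \sum_(q' <- cop b) Df (fun t' w' => f (actA q'.1 (actA q.1 a) :: t') w') q'.2 t w) q.2 s v.
    by apply: D_ext => t w _; rewrite D_cons.
  rewrite D_sumf; apply: eq_bigr => q' _; apply: IH; exact: Hf.2.
rewrite exchange_big /=; apply: eq_bigr => q' _; apply: eq_bigr => q _.
by rewrite actA_mul.
Qed.


Lemma D_face (W : lmodType k) (f : seq A -> V -> W) b j s v :
  ML (size s).-1 f -> (j < size s)%N ->
  Df f b (fc j (s, v)).1 (fc j (s, v)).2 = Df (Fc f j) b s v.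
Proof.
elim: s f b j v => [|a s IH] f b j v //.
case: j => [|j].
  case: s IH => [|a' s] IH Hf _.
    rewrite face0_l /= D_nil D_cons equiv_l.
    rewrite (lin_sum (phi := f [::])); last exact: Hf.
    by apply: eq_bigr => q _; rewrite D_nil.
  rewrite face0_mul /= D_cons [RHS]D_cons.
  transitivity (\sum_(q <- cop b) \sum_(p <- cop q.1)
     Df (fun t w => f (mul (actA p.1 a) (actA p.2 a') :: t) w) q.2 s v).
    apply: eq_bigr => q _; rewrite -D_sumf; apply: D_ext => t w Ht.
    rewrite modalg (lin_sum (phi := fun x => f (x :: t) w)) //.
    by move=> c x y; apply: Hf.1.
  transitivity (\sum_(q <- cop b) \sum_(p <- cop q.2)
     Df (fun t w => f (mul (actA q.1 a) (actA p.1 a') :: t) w) p.2 s v).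
    have Htri : trilinear_map (fun x y z : B =>
        Df (fun t w => f (mul (actA x a) (actA y a') :: t) w) z s v).
      split.
      - move=> c x x' y z; rewrite -D_comb; apply: D_ext => t w Ht.
        by rewrite actAl mull Hf.1.
      - move=> c x y y' z; rewrite -D_comb; apply: D_ext => t w Ht.
        by rewrite actAl mulr' Hf.1.
      - by move=> c x y z z'; apply: D_linb; apply: Hf.2.
    have E := cop_coassoc Htri b; cbv beta in E; exact: E.
  apply: eq_bigr => q _; rewrite D_cons; apply: eq_bigr => p _.
  by apply: D_ext => t w _; rewrite /Fc face0_mul.
move=> Hf Hj.
rewrite face_cons; last exact: Hj.
set p := fc j (s, v); rewrite /=.
rewrite D_cons [RHS]D_cons /=; apply: eq_bigr => q _.
have Hj' : (j < size s)%N := Hj.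
have Hf' : ML (size s) f := Hf.
case Es: (size s) Hj' Hf' => [|m] // Hj' Hf'.
rewrite /p IH; last by rewrite Es.
  by apply: D_ext => t w Ht; rewrite /Fc face_cons // Ht Es.
by rewrite Es; apply: Hf'.2.
Qed.


Lemma ML_last (W : lmodType k) n (f : seq A -> V -> W) : ML n f -> ML n.+1 (Fc f n.+1).
Proof.
move=> Hf.
have H : ML n.+1 (fun s w => f (behead s) (r w (head 0 s))).
  split.
    by move=> t Ht v c a a' /=; rewrite rr (ML_linV Hf).
  by move=> a /=; exact: (ML_compV (fun c w w' => rl c w w' a) Hf).
move: H; apply: ML_ext => s w Hs.
case: s Hs => [|a t] // [Ht].
by rewrite /Fc -Ht face_last.
Qed.

Lemma ML_face (W : lmodType k) n (f : seq A -> V -> W) j :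
  ML n f -> (j <= n.+1)%N -> ML n.+1 (Fc f j).
Proof.
elim: n f j => [|n IH] f j Hf Hj.
  case: j Hj => [|[|//]] _; last exact: ML_last.
  split.
    move=> t Ht v c a a'; case: t Ht => // _.
    by rewrite /Fc !face0_l /= ll (ML_linV Hf).
  move=> a c v v'.
  by rewrite /Fc !face0_l /= lr (ML_linV Hf).
case: (ltngtP j n.+2) Hj => // Hj _; last by rewrite Hj; exact: ML_last.
case: j Hj => [|j] Hj.
  split.
    move=> t Ht v c a a'; case: t Ht => // a1 t [Ht].
    by rewrite /Fc !face0_mul /= mull Hf.1.
  move=> a; split.
    move=> t Ht v c a1 a2.
    by rewrite /Fc !face0_mul /= mulr' Hf.1.
  move=> a1; move: (Hf.2 (mul a a1)); apply: ML_ext => t w _.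
  by rewrite /Fc face0_mul.
split.
  move=> t Ht v c a a'.
  have Hjt : (j < size t)%N by rewrite Ht.
  rewrite /Fc !face_cons //.
  by apply: Hf.1; rewrite size_face /= Ht.
move=> a; have := IH (fun t w => f (a :: t) w) j (Hf.2 a) (ltnW Hj).
apply: ML_ext => t w Ht; rewrite /Fc face_cons // Ht; exact: Hj.
Qed.


Notation J := (inJ cop mul actA l r actV).
Notation LL := (Lact cop actA actV).
Notation dd := (dCH mul l r).
Notation FF := (faceF mul l r).
Notation CL := (commL cop mul actA l r actV).

Lemma S_cat (W : lmodType k) (f : seq A -> V -> W) x y : S f (x ++ y) = S f x + S f y.
Proof. by rewrite /S big_cat. Qed.

Lemma S_flat (W : lmodType k) (f : seq A -> V -> W) (I : Type) (ys : seq I) (h : I -> fsum A V) :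
  S f (flatten [seq h q | q <- ys]) = \sum_(q <- ys) S f (h q).
Proof. by rewrite /S big_flatten big_map. Qed.

Lemma S_faceF (W : lmodType k) (f : seq A -> V -> W) j x : S f (FF j x) = S (Fc f j) x.
Proof. by rewrite /S big_map; apply: eq_bigr => [[s v]] _. Qed.

Lemma S_Lact (W : lmodType k) (f : seq A -> V -> W) b x : S f (LL b x) = S (Df f b) x.
Proof. by rewrite /S big_flatten big_map. Qed.

Lemma S_scale (W : lmodType k) (f : seq A -> V -> W) c x :
  S (fun t w => c *: f t w) x = c *: S f x.
Proof. by rewrite /S scaler_sumr. Qed.

Lemma ML_scaleV (W : lmodType k) n (f : seq A -> V -> W) s c v :
  ML n f -> size s = n -> f s (c *: v) = c *: f s v.
Proof.
move=> Hf Hs; have := ML_linV Hf Hs c v 0; rewrite addr0 => ->.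
have H0 : f s 0 = 0 := lin0 (ML_linV Hf Hs).
by rewrite H0 addr0.
Qed.

Lemma S_fscale (W : lmodType k) n (f : seq A -> V -> W) c x :
  wf n x -> ML n f -> S f (fscale c x) = c *: S f x.
Proof.
move=> Hx Hf; rewrite /S big_map scaler_sumr; apply: eq_big_seq => p Hp /=.
by apply: ML_scaleV Hf _; move/allP: Hx => /(_ p Hp) /eqP.
Qed.

Lemma wf_cat n (x y : fsum A V) : wf n (x ++ y) = wf n x && wf n y.
Proof. by rewrite /wf all_cat. Qed.

Lemma wf_fscale n c (x : fsum A V) : wf n (fscale c x) = wf n x.
Proof. by rewrite /wf all_map. Qed.

Lemma wf_fscaleI n c (x : fsum A V) : wf n x -> wf n (fscale c x).
Proof. by rewrite wf_fscale. Qed.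

Lemma wf_faceF n j (x : fsum A V) : wf n.+1 x -> wf n (FF j x).
Proof.
move=> /allP Hx; apply/allP => p /mapP [q Hq ->].
by rewrite /= size_face; move: (Hx q Hq) => /eqP ->.
Qed.

Lemma wf_Lact n b (x : fsum A V) : wf n x -> wf n (LL b x).
Proof.
move=> /allP Hx; apply/allP => p /flattenP [y /mapP [q Hq ->] Hp].
move/allP: (size_diag b q.1 q.2) => /(_ p Hp) /eqP ->.
exact: Hx.
Qed.

Lemma wf_flat (n : nat) (I : eqType) (ys : seq I) (h : I -> fsum A V) :
  (forall q, q \in ys -> wf n (h q)) -> wf n (flatten [seq h q | q <- ys]).
Proof.
elim: ys => [|q ys IH] H //=.
rewrite wf_cat H ?mem_head //= IH // => q' Hq'; apply: H.
by rewrite in_cons Hq' orbT.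
Qed.

Lemma wf_dCH n (x : fsum A V) : wf n.+1 x -> wf n (dd n.+1 x).
Proof.
move=> Hx; rewrite /dCH; apply: wf_flat => j _.
by rewrite wf_fscale; apply: wf_faceF.
Qed.

Lemma wf_commL n b (y : fsum A V) : wf n.+1 y -> wf n (CL n b y).
Proof.
move=> Hy; rewrite /commL /fsub wf_cat wf_fscale.
by apply/andP; split; [apply: wf_Lact; exact: wf_faceF | apply: wf_faceF; exact: wf_Lact].
Qed.

Lemma teqP n (x y : fsum A V) : teq n x y <-> forall (W : lmodType k) (f : seq A -> V -> W), ML n f -> S f x = S f y.
Proof.
split=> H W f Hf; first by apply: H; apply/ML_multilinear.
by apply: H; apply/ML_multilinear.
Qed.

Lemma S_dCH (W : lmodType k) n (f : seq A -> V -> W) x : wf n.+1 x -> ML n f ->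
  S f (dd n.+1 x) = \sum_(j <- iota 0 n.+2) (-1) ^+ j *: S (Fc f j) x.
Proof.
move=> Hx Hf; rewrite /dCH S_flat; apply: eq_bigr => j _.
by rewrite (S_fscale _ (wf_faceF j Hx) Hf) S_faceF.
Qed.

Definition Cf (W : lmodType k) (f : seq A -> V -> W) b n : seq A -> V -> W :=
  fun s v => (-1) *: Df (Fc f n.+1) b s v + Fc (Df f b) n.+1 s v.

Lemma ML_Cf (W : lmodType k) n (f : seq A -> V -> W) b : ML n f -> ML n.+1 (Cf f b n).
Proof.
move=> Hf; apply: ML_comb; first by apply: ML_D; apply: ML_face.
by apply: ML_face => //; apply: ML_D.
Qed.

Lemma S_commL (W : lmodType k) n (f : seq A -> V -> W) b y : wf n.+1 y -> ML n f ->
  S f (CL n b y) = S (Cf f b n) y.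
Proof.
move=> Hy Hf; rewrite /commL /fsub S_cat.
rewrite (S_fscale _ (wf_faceF _ (wf_Lact b Hy)) Hf).
by rewrite S_Lact S_faceF S_faceF S_Lact /Cf S_comb addrC.
Qed.

Lemma S_commL_scale (W : lmodType k) n (f : seq A -> V -> W) b c y : wf n.+1 y -> ML n f ->
  S f (CL n b (fscale c y)) = c *: S (Cf f b n) y.
Proof.
move=> Hy Hf; rewrite S_commL ?wf_fscale //.
exact: (S_fscale _ Hy (ML_Cf b Hf)).
Qed.


Lemma Fc_Fc (W : lmodType k) (f : seq A -> V -> W) i j t w :
  Fc (Fc f i) j t w = f (fc i (fc j (t, w))).1 (fc i (fc j (t, w))).2.
Proof. by rewrite /Fc -surjective_pairing. Qed.

Lemma J_nil n : J n [::].
Proof. by split=> //; exists [::]; split=> //; apply/teqP. Qed.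

Lemma J_comb n (x y : fsum A V) c : J n x -> J n y -> J n (x ++ fscale c y).
Proof.
move=> [wx [ysx [wysx /teqP Hx]]] [wy [ysy [wysy /teqP Hy]]].
split; first by rewrite wf_cat wf_fscale wx wy.
exists (ysx ++ [seq (q.1, fscale c q.2) | q <- ysy]); split.
  rewrite all_cat wysx /=; apply/allP => q' /mapP [q Hq ->] /=.
  by rewrite wf_fscale; move/allP: wysy => /(_ q Hq).
apply/teqP => W f Hf.
rewrite S_cat (S_fscale _ wy Hf) (Hx _ _ Hf) (Hy _ _ Hf) map_cat flatten_cat S_cat.
rewrite !S_flat big_map; congr (_ + _).
rewrite scaler_sumr; apply: eq_big_seq => q Hq /=.
have wq : wf n.+1 q.2 by move/allP: wysy => /(_ q Hq).
by rewrite (S_commL_scale _ _ wq Hf) (S_commL _ wq Hf).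
Qed.

Lemma pt3 (W : lmodType k) n (f : seq A -> V -> W) b c t w : ML n f -> size t = n.+1 ->
  Cf (Df f b) c n t w = (-1) *: Df (Cf f b n) c t w + Cf f (b * c) n t w.
Proof.
move=> Hf Ht; rewrite /Cf D_comb.
have Hs : size (fc n.+1 (t, w)).1 = n by rewrite size_face /= Ht.
have E1 : Fc (Df (Df f b) c) n.+1 t w = Fc (Df f (b * c)) n.+1 t w.
  by rewrite /Fc D_mul // Hs.
have E2 : Df (Df (Fc f n.+1) b) c t w = Df (Fc f n.+1) (b * c) t w.
  by rewrite D_mul // Ht; apply: ML_face.
rewrite E1 E2 !scaleN1r opprD opprK.
by rewrite addrACA addrN add0r.
Qed.

Lemma J_L n b (x : fsum A V) : J n x -> J n (LL b x).
Proof.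
move=> [wx [ys [wys /teqP Hx]]].
split; first exact: wf_Lact.
exists (flatten [seq [:: (b * q.1, q.2); (b, fscale (-1) (LL q.1 q.2))] | q <- ys]); split.
  apply/allP => q' /flattenP [z /mapP [q Hq ->]].
  have wq : wf n.+1 q.2 by move/allP: wys => /(_ q Hq).
  rewrite !inE => /orP [/eqP -> // | /eqP ->] /=.
  by rewrite wf_fscale; apply: wf_Lact.
apply/teqP => W f Hf.
rewrite S_Lact (Hx _ _ (ML_D b Hf)) !S_flat big_flatten big_map.
apply: eq_big_seq => q Hq.
have wq : wf n.+1 q.2 by move/allP: wys => /(_ q Hq).
rewrite big_cons big_seq1 /=.
rewrite (S_commL _ wq (ML_D b Hf)) (S_commL _ wq Hf).
rewrite (S_commL_scale _ _ (wf_Lact _ wq) Hf) S_Lact addrC -S_comb.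
by apply: (S_ext wq) => t w Ht; apply: pt3.
Qed.

Lemma iota_last n : iota 0 n.+1 = iota 0 n ++ [:: n].
Proof. by rewrite -addn1 iotaD. Qed.

Lemma J_comm n b (x : fsum A V) : wf n.+1 x ->
  J n (fsub (LL b (dd n.+1 x)) (dd n.+1 (LL b x))).
Proof.
move=> Hx; split.
  rewrite /fsub wf_cat wf_fscale; apply/andP; split.
    by apply: wf_Lact; apply: wf_dCH.
  by apply: wf_dCH; apply: wf_Lact.
exists [:: (b, fscale ((-1) ^+ n.+1) x)]; split; first by rewrite /= wf_fscale Hx.
apply/teqP => W f Hf.
rewrite /fsub S_cat (S_fscale _ (wf_dCH (wf_Lact b Hx)) Hf) S_Lact.
rewrite (S_dCH Hx (ML_D b Hf)) (S_dCH (wf_Lact b Hx) Hf).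
rewrite [in RHS]/= cats0 (S_commL_scale _ _ Hx Hf) /Cf S_comb.
rewrite iota_last !big_cat !big_seq1 /=.
have E : \sum_(j <- iota 0 n.+1) (-1) ^+ j *: S (Fc (Df f b) j) x =
         \sum_(j <- iota 0 n.+1) (-1) ^+ j *: S (Fc f j) (LL b x).
  apply: eq_big_seq => j; rewrite mem_iota add0n => /andP [_ Hj].
  rewrite S_Lact; congr (_ *: _); apply: (S_ext Hx) => t w Ht.
  by rewrite /Fc D_face // Ht.
rewrite E S_Lact.
set X := \sum_(j <- _) _.
rewrite !scaleN1r scalerDr scalerN opprD.
by rewrite addrACA addrN add0r addrC.
Qed.


Lemma pt2a (W : lmodType k) n (f : seq A -> V -> W) b j s v : ML n f -> size s = n.+2 ->
  (j <= n)%N -> Cf (Fc f j) b n.+1 s v = Fc (Cf f b n) j.+1 s v.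
Proof.
move=> Hf Hs Hj; rewrite /Cf.
have EA : Fc (Df (Fc f j) b) n.+2 s v = Fc (Df f b) n.+1 (fc j.+1 (s, v)).1 (fc j.+1 (s, v)).2.
  rewrite {1}/Fc -D_face; [|by rewrite size_face /= Hs|by rewrite size_face /= Hs].
  by rewrite -surjective_pairing (face_F1 _ Hs) // /Fc -surjective_pairing.
have EB : Df (Fc (Fc f j) n.+2) b s v = Df (Fc f n.+1) b (fc j.+1 (s, v)).1 (fc j.+1 (s, v)).2.
  rewrite D_face; [|by rewrite Hs; apply: ML_last|by rewrite Hs].
  by apply: D_ext => t w Ht; rewrite !Fc_Fc (face_F1 _ (etrans Ht Hs)).
by rewrite EA EB.
Qed.

Lemma pt2b (W : lmodType k) n (f : seq A -> V -> W) b s v : ML n f -> size s = n.+2 ->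
  Cf (Fc f n.+1) b n.+1 s v = (-1) *: Fc (Cf f b n) n.+2 s v + Fc (Cf f b n) 0 s v.
Proof.
move=> Hf Hs; rewrite [LHS]/Cf.
have E1 : forall i, Fc (Cf f b n) i s v = (-1) *: Df (Fc f n.+1) b (fc i (s, v)).1 (fc i (s, v)).2
    + Fc (Df f b) n.+1 (fc i (s, v)).1 (fc i (s, v)).2 by [].
have EX : Fc (Df f b) n.+1 (fc 0 (s, v)).1 (fc 0 (s, v)).2 =
          Fc (Df f b) n.+1 (fc n.+2 (s, v)).1 (fc n.+2 (s, v)).2.
  by rewrite /Fc -!surjective_pairing (face_F2 _ Hs).
have EB : Df (Fc (Fc f n.+1) n.+2) b s v = Df (Fc f n.+1) b (fc 0 (s, v)).1 (fc 0 (s, v)).2.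
  rewrite D_face; [|by rewrite Hs; apply: ML_last|by rewrite Hs].
  by apply: D_ext => t w Ht; rewrite !Fc_Fc (face_F2 _ (etrans Ht Hs)).
rewrite EB !E1 EX.
set P0 := Df (Fc f n.+1) b _ _.
set PL := Df (Fc f n.+1) b (fc n.+2 (s, v)).1 _.
set Y := Fc (Df f b) n.+1 _ _.
rewrite !scaleN1r opprD opprK.
change (Fc (Df (Fc f n.+1) b) n.+2 s v) with PL.
by rewrite addrACA addNr addr0 addrC.
Qed.


Lemma J_d n (x : fsum A V) : J n.+1 x -> J n (dd n.+1 x).
Proof.
move=> [wx [ys [wys /teqP Hx]]].
split; first exact: wf_dCH.
have wysq : forall q, q \in ys -> wf n.+2 q.2 by move=> q Hq; move/allP: wys => /(_ q Hq).
exists (flatten [seq [seq (q.1, fscale ((-1) ^+ j) (FF j.+1 q.2)) | j <- iota 0 n.+1] ++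
   [:: (q.1, fscale ((-1) ^+ n.+1) (FF 0 q.2)); (q.1, fscale (- (-1) ^+ n.+1) (FF n.+2 q.2))]
   | q <- ys]); split.
  apply/allP => q' /flattenP [z /mapP [q Hq ->]].
  have wq := wysq q Hq.
  rewrite mem_cat => /orP [/mapP [j _ ->] | ]; last rewrite !inE => /orP [/eqP -> | /eqP ->].
  - exact: (wf_fscaleI ((-1) ^+ j) (wf_faceF j.+1 wq)).
  - exact: (wf_fscaleI ((-1) ^+ n.+1) (wf_faceF 0 wq)).
  - exact: (wf_fscaleI (- (-1) ^+ n.+1) (wf_faceF n.+2 wq)).
apply/teqP => W f Hf.
have wX : wf n.+1 (flatten [seq CL n.+1 q.1 q.2 | q <- ys]).
  by apply: wf_flat => q Hq; apply: wf_commL; apply: wysq.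
rewrite (S_dCH wx Hf).
transitivity (\sum_(j <- iota 0 n.+2) (-1) ^+ j *:
   \sum_(q <- ys) S (Cf (Fc f j) q.1 n.+1) q.2).
  apply: eq_big_seq => j; rewrite mem_iota add0n => /andP [_ Hj].
  have Hfj : ML n.+1 (Fc f j) by apply: ML_face.
  rewrite (Hx _ _ Hfj) S_flat; congr (_ *: _); apply: eq_big_seq => q Hq.
  exact: S_commL (wysq q Hq) Hfj.
rewrite S_flat big_flatten big_map.
rewrite [LHS](eq_bigr (fun j => \sum_(q <- ys) (-1) ^+ j *: S (Cf (Fc f j) q.1 n.+1) q.2));
  last by move=> j _; rewrite scaler_sumr.
rewrite exchange_big; apply: eq_big_seq => q Hq.
have wq := wysq q Hq.
rewrite big_cat big_map big_cons big_seq1 iota_last big_cat big_seq1 /=.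
have E : \sum_(j <- iota 0 n.+1) (-1) ^+ j *: S (Cf (Fc f j) q.1 n.+1) q.2 =
         \sum_(j <- iota 0 n.+1) S f (CL n q.1 (fscale ((-1) ^+ j) (FF j.+1 q.2))).
  apply: eq_big_seq => j; rewrite mem_iota add0n => /andP [_ Hj].
  rewrite (S_commL_scale _ _ (wf_faceF _ wq) Hf) S_faceF; congr (_ *: _).
  by apply: (S_ext wq) => t w Ht; apply: pt2a.
rewrite E; congr (_ + _).
rewrite (S_commL_scale _ _ (wf_faceF _ wq) Hf) (S_commL_scale _ _ (wf_faceF _ wq) Hf).
rewrite !S_faceF.
have -> : S (Cf (Fc f n.+1) q.1 n.+1) q.2 =
    (-1) *: S (Fc (Cf f q.1 n) n.+2) q.2 + S (Fc (Cf f q.1 n) 0) q.2.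
  by rewrite -S_comb; apply: (S_ext wq) => t w Ht; apply: pt2b.
by rewrite scalerDr scalerA mulrN1 addrC.
Qed.


Lemma main_sec :
  [/\ (forall n, J n [::]) /\
      (forall n (x y : fsum A V) c, J n x -> J n y -> J n (x ++ fscale c y)),
      (forall n (x : fsum A V), J n.+1 x -> J n (dd n.+1 x)),
      (forall n b (x : fsum A V), J n x -> J n (LL b x)) &
      (forall n b (x : fsum A V), wf n.+1 x -> J n (fsub (LL b (dd n.+1 x)) (dd n.+1 (LL b x))))].
Proof.
split; [split; [exact: J_nil | exact: J_comb] | exact: J_d | exact: J_L | exact: J_comm].
Qed.

End Prf.

Unset Implicit Arguments.
Set Strict Implicit.

Theorem proposition2p4 (k : fieldType) (B : algType k)
  (cop : B -> seq (B * B)) (eps : B -> k)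
  (A : lmodType k) (mul : A -> A -> A) (actA : B -> A -> A)
  (V : lmodType k) (l : A -> V -> V) (r : V -> A -> V) (actV : B -> V -> V) :
  is_bialgebra cop eps ->
  is_module_algebra cop mul actA ->
  is_equivariant_bimodule cop mul actA l r actV ->
  let J := inJ cop mul actA l r actV in
  let d := dCH mul l r in
  let L := Lact cop actA actV in
  [/\ (* J_n is a k-submodule of CH_n *)
      (forall n, J n [::]) /\
      (forall n x y c, J n x -> J n y -> J n (x ++ fscale c y)),
      (* J_* is stable under the differential *)
      (forall n x, J n.+1 x -> J n (d n.+1 x)),
      (* J_* is a graded B-submodule for the diagonal action *)
      (forall n b x, J n x -> J n (L b x)) &
      (* the induced differential on QCH = CH / J is B-linear:
         L_b d - d L_b maps CH_{n+1} into J_n *)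
      (forall n b x, wf n.+1 x -> J n (fsub (L b (d n.+1 x)) (d n.+1 (L b x))))].
Proof.
move=> [Hlin Hcoa _ Halg _] [[Hmul _] [HAb HAm _] Hmod]
  [[Hl Hr _ Hrm Hrl] [HVb HVm _] Heql _] J d L.
apply: (main_sec Hrl Hrm Hlin Hcoa _ HAb HAm HVb HVm Hmul Hl Hr Hmod Heql).
by move=> W f Hf; have [H _] := Halg W f Hf.
Qed.
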